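(* Let $T=\mathbf R[[x,y,z,w]]/(x^2+y^2)$ and let $R$ be an N-subring of $T$. Let $\omega,h\in T$ be such that the image of $\omega+zh$ in $T/(x,y)T$ is transcendental over the image of $R$ in $T/(x,y)T$. Then there is a subset $\Psi\subseteq\mathbf R$ with $|\Psi|\le|R|$ such that for every $u\in\mathbf R\setminus\Psi$, the image of $\omega+zh$ in $T/(x,y,z+uw)T$ is transcendental over $R/((x,y,z+uw)T\cap R)$.
   Context: $T=\mathbf R[[x,y,z,w]]/(x^2+y^2)$ with maximal ideal $\mathfrak m$; $x,y,z,w$ also denote their images in $T$. An N-subring of $T$ is a quasi-local unique factorization domain $(R,\mathfrak m\cap R)$ contained in $T$ with $|R|<|\mathbf R|$ such that whenever $t\in T$ is nonzero and $P\in\operatorname{Ass}(T/tT)$, $\operatorname{ht}(P\cap R)\le1$. *)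

(* Defs.v *)
From Stdlib Require Import Reals List Permutation ClassicalEpsilon.
Import ListNotations.
Open Scope R_scope.

(* A series is its coefficient function: f a b c d = coeff of x^a y^b z^c w^d. *)
Definition S := nat -> nat -> nat -> nat -> R.

Definition sadd (f g : S) : S := fun a b c d => f a b c d + g a b c d.
Definition sopp (f : S) : S := fun a b c d => - f a b c d.
(* Cauchy product; sum_f_R0 F n = F 0 + ... + F n *)
Definition smul (f g : S) : S := fun a b c d =>
  sum_f_R0 (fun i => sum_f_R0 (fun j => sum_f_R0 (fun k => sum_f_R0 (fun l =>
    f i j k l * g (a - i)%nat (b - j)%nat (c - k)%nat (d - l)%nat) d) c) b) a.
Definition smono (a0 b0 c0 d0 : nat) : S := fun a b c d =>
  if (Nat.eqb a a0 && Nat.eqb b b0 && Nat.eqb c c0 && Nat.eqb d d0)%bool then 1 else 0.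
Definition sconst (r : R) : S := fun a b c d =>
  if (Nat.eqb a 0 && Nat.eqb b 0 && Nat.eqb c 0 && Nat.eqb d 0)%bool then r else 0.

Definition sqq : S := sadd (smono 2 0 0 0) (smono 0 2 0 0).

Definition eqv (p q : S) : Prop :=
  exists s : S, forall a b c d, p a b c d - q a b c d = smul sqq s a b c d.

Definition T : Type := { C : S -> Prop | exists p : S, C = eqv p }.

Definition toT (p : S) : T := exist _ (eqv p) (ex_intro _ p eq_refl).
Definition rep (t : T) : S :=
  proj1_sig (constructive_indefinite_description _ (proj2_sig t)).

Definition Tzero : T := toT (sconst 0).
Definition Tone : T := toT (sconst 1).
Definition Tconst (r : R) : T := toT (sconst r).
Definition Tadd (s t : T) : T := toT (sadd (rep s) (rep t)).
Definition Topp (t : T) : T := toT (sopp (rep t)).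
Definition Tmul (s t : T) : T := toT (smul (rep s) (rep t)).

Definition Tx : T := toT (smono 1 0 0 0).
Definition Ty : T := toT (smono 0 1 0 0).
Definition Tz : T := toT (smono 0 0 1 0).
Definition Tw : T := toT (smono 0 0 0 1).

Fixpoint in_ideal (gs : list T) (t : T) : Prop :=
  match gs with
  | [] => t = Tzero
  | g :: gs' => exists c t', t = Tadd (Tmul c g) t' /\ in_ideal gs' t'
  end.

Definition in_m (t : T) : Prop := in_ideal [Tx; Ty; Tz; Tw] t.

Definition is_ideal_T (P : T -> Prop) : Prop :=
  P Tzero /\ (forall a b, P a -> P b -> P (Tadd a b)) /\
  (forall a b, P b -> P (Tmul a b)).

Definition is_prime_T (P : T -> Prop) : Prop :=
  is_ideal_T P /\ ~ P Tone /\ (forall a b, P (Tmul a b) -> P a \/ P b).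

(* P in Ass(T/tT): P prime and P = (tT :_T s) for some s in T *)
Definition is_ass_T (t : T) (P : T -> Prop) : Prop :=
  is_prime_T P /\ exists s : T, forall a, P a <-> in_ideal [t] (Tmul a s).

Definition is_subring (Rs : T -> Prop) : Prop :=
  Rs Tzero /\ Rs Tone /\ (forall a b, Rs a -> Rs b -> Rs (Tadd a b)) /\
  (forall a, Rs a -> Rs (Topp a)) /\ (forall a b, Rs a -> Rs b -> Rs (Tmul a b)).

Definition is_domain_sub (Rs : T -> Prop) : Prop :=
  Tone <> Tzero /\ forall a b, Rs a -> Rs b -> Tmul a b = Tzero -> a = Tzero \/ b = Tzero.

Definition unit_in (Rs : T -> Prop) (a : T) : Prop :=
  Rs a /\ exists b, Rs b /\ Tmul a b = Tone.

Definition irreducible_in (Rs : T -> Prop) (a : T) : Prop :=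
  Rs a /\ a <> Tzero /\ ~ unit_in Rs a /\
  forall b c, Rs b -> Rs c -> a = Tmul b c -> unit_in Rs b \/ unit_in Rs c.

Definition assoc_in (Rs : T -> Prop) (a b : T) : Prop :=
  exists u, unit_in Rs u /\ a = Tmul u b.

Definition prod_list (l : list T) : T := fold_right Tmul Tone l.

Definition is_UFD_sub (Rs : T -> Prop) : Prop :=
  is_domain_sub Rs /\
  (forall a, Rs a -> a <> Tzero -> ~ unit_in Rs a ->
     exists l, l <> [] /\ Forall (irreducible_in Rs) l /\ a = prod_list l) /\
  (forall l1 l2, Forall (irreducible_in Rs) l1 -> Forall (irreducible_in Rs) l2 ->
     prod_list l1 = prod_list l2 ->
     exists l2', Permutation l2 l2' /\ Forall2 (assoc_in Rs) l1 l2').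

Definition is_ideal_in (Rs : T -> Prop) (I : T -> Prop) : Prop :=
  (forall a, I a -> Rs a) /\ I Tzero /\
  (forall a b, I a -> I b -> I (Tadd a b)) /\
  (forall a b, Rs a -> I b -> I (Tmul a b)).

Definition is_maximal_in (Rs : T -> Prop) (I : T -> Prop) : Prop :=
  is_ideal_in Rs I /\ ~ I Tone /\
  forall J, is_ideal_in Rs J -> (forall a, I a -> J a) ->
    (forall a, J a <-> I a) \/ (forall a, J a <-> Rs a).

Definition is_prime_in (Rs : T -> Prop) (I : T -> Prop) : Prop :=
  is_ideal_in Rs I /\ ~ I Tone /\
  forall a b, Rs a -> Rs b -> I (Tmul a b) -> I a \/ I b.

Definition is_quasilocal_sub (Rs : T -> Prop) : Prop :=
  is_maximal_in Rs (fun a => Rs a /\ in_m a) /\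
  forall I, is_maximal_in Rs I -> forall a, I a <-> (Rs a /\ in_m a).

Definition strict_sub (A B : T -> Prop) : Prop :=
  (forall a, A a -> B a) /\ exists b, B b /\ ~ A b.

Definition height_le1_in (Rs : T -> Prop) (Q : T -> Prop) : Prop :=
  ~ exists Q0 Q1, is_prime_in Rs Q0 /\ is_prime_in Rs Q1 /\
      strict_sub Q0 Q1 /\ strict_sub Q1 Q.

Definition card_lt_R (Rs : T -> Prop) : Prop :=
  (exists f : {t : T | Rs t} -> R, forall a b, f a = f b -> a = b) /\
  ~ (exists g : R -> {t : T | Rs t}, forall a b, g a = g b -> a = b).

Definition N_subring (Rs : T -> Prop) : Prop :=
  is_subring Rs /\ is_quasilocal_sub Rs /\ is_UFD_sub Rs /\ card_lt_R Rs /\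
  forall t P, t <> Tzero -> is_ass_T t P -> height_le1_in Rs (fun a => P a /\ Rs a).

(* polynomial evaluation, coefficients listed from the constant term *)
Definition peval (rs : list T) (v : T) : T :=
  fold_right (fun r acc => Tadd r (Tmul v acc)) Tzero rs.

(* The image of v in T/J (J = ideal generated by gs) is transcendental over the image
   of Rs in T/J (equivalently over Rs/(J ∩ Rs)): every polynomial with coefficients
   in Rs whose value at v lies in J has all coefficients in J. *)
Definition transc_mod (gs : list T) (Rs : T -> Prop) (v : T) : Prop :=
  forall rs : list T, Forall Rs rs -> in_ideal gs (peval rs v) -> Forall (in_ideal gs) rs.

(* Main.v *)
Require Import Defs.
From Stdlib Require Import Reals List.
Import ListNotations.
Open Scope R_scope.
From Stdlib Require Import Lia Lra FunctionalExtensionality PropExtensionality ProofIrrelevance ClassicalEpsilon Classical.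
From Stdlib Require Cantor.
Notation SS := Datatypes.S.

Module Roots.
From mathcomp Require Import all_boot all_algebra.
From mathcomp Require Import Rstruct.
Import GRing.Theory Num.Theory.
Section Roots.
Local Open Scope ring_scope.

Lemma poly_roots_list (p : {poly R}) : p != 0 ->
  exists L : list R, forall v, root p v -> In v L.
Proof.
move: {2}(size p) (leqnn (size p)) => n; elim: n p => [|n IH] p.
  by rewrite leqn0 size_poly_eq0 => /eqP -> /eqP.
move=> Hs Hp.
have [[v Hv]|Hno] : (exists v, root p v) \/ ~ (exists v, root p v).
  by apply: Classical_Prop.classic.
  move/factor_theorem: Hv => [q Hq].
  have Hq0 : q != 0.
    by apply/eqP => Hq0; move/eqP: Hp; apply; rewrite Hq Hq0 mul0r.
  have Hsq : (size q <= n)%N.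
    move: Hs; rewrite Hq size_Mmonic ?monicXsubC // ?size_XsubC //.
    by rewrite addn2 /=.
  have [L HL] := IH q Hsq Hq0.
  exists (v :: L) => x; rewrite Hq rootM => /orP [/HL Hx|].
    by right.
  by rewrite root_XsubC => /eqP ->; left.
exists nil => v Hv; apply: Hno; exists v; exact: Hv.
Qed.

Lemma roots_finite (n : nat) (a : nat -> R) :
  (exists c, (c <= n)%coq_nat /\ a c <> R0) ->
  exists L : list R, forall v, sum_f_R0 (fun c => Rmult (a c) (pow v c)) n = R0 -> In v L.
Proof.
move=> [c [Hc Hac]].
pose p : {poly R} := \poly_(i < n.+1) a i.
have Hp : p != 0.
  apply/eqP => H; apply: Hac.
  have : p`_c = a c.
    rewrite coef_poly; case: ltnP => //; rewrite ltnNge => /negP []; apply/leP; exact: Hc.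
  by move=> <-; rewrite H coef0.
have [L HL] := poly_roots_list _ Hp.
exists L => v Hv; apply: HL.
rewrite /root horner_poly; apply/eqP; etransitivity; last exact: Hv.
rewrite sum_f_R0E big_mkord.
by apply: eq_bigr => i _; rewrite RmultE RpowE.
Qed.
End Roots.

End Roots.

Module Card.
From mathcomp Require Import all_boot classical_sets.
Local Open Scope nat_scope.

Section Card.
Variable X : Type.

Definition inj_into (A B : X -> Prop) : Prop :=
  exists f : X -> X, (forall x, A x -> B (f x)) /\
    (forall x y, A x -> A y -> f x = f y -> x = y).

Definition pinj (A B : X -> Prop) (H : X * X -> Prop) : Prop :=
  (forall a b, H (a, b) -> A a /\ B b) /\
  (forall a b b', H (a, b) -> H (a, b') -> b = b') /\
  (forall a a' b, H (a, b) -> H (a', b) -> a = a').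

Lemma compare_card (A B : X -> Prop) : inj_into A B \/ inj_into B A.
Proof.
have [H [[HAB [Hf Hi]] Hmax]] : exists H, pinj A B H /\ forall H', proper H H' -> ~ pinj A B H'.
  apply: (@Zorn_bigcup _ (pinj A B)) => F FP Ftot.
  split; [|split].
  - move=> a b [H FH Hab]; exact: ((FP H FH).1 a b Hab).
  - move=> a b b' [H1 F1 h1] [H2 F2 h2].
    case: (Ftot H1 H2 F1 F2) => S12.
    + exact: ((FP H2 F2).2.1 a b b' (S12 _ h1) h2).
    + exact: ((FP H1 F1).2.1 a b b' h1 (S12 _ h2)).
  - move=> a a' b [H1 F1 h1] [H2 F2 h2].
    case: (Ftot H1 H2 F1 F2) => S12.
    + exact: ((FP H2 F2).2.2 a a' b (S12 _ h1) h2).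
    + exact: ((FP H1 F1).2.2 a a' b h1 (S12 _ h2)).
case: (classic (forall a, A a -> exists b, H (a, b))) => Hdom.
  left.
  exists (fun a => epsilon (inhabits a) (fun b => H (a, b))).
  have He : forall a, A a -> H (a, epsilon (inhabits a) (fun b => H (a, b))).
    move=> a Aa; exact: (epsilon_spec (inhabits a) (fun b => H (a, b)) (Hdom a Aa)).
  split.
  - move=> a Aa; exact: (HAB _ _ (He a Aa)).2.
  - move=> a a' Aa Aa' E; apply: (Hi a a' _ (He a Aa)); rewrite E; exact: He.
have [a0 [Aa0 Na0]] : exists a0, A a0 /\ ~ exists b, H (a0, b).
  apply: NNPP => N; apply: Hdom => a Aa; apply: NNPP => N'; apply: N; exists a; by split.
case: (classic (forall b, B b -> exists a, H (a, b))) => Hran.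
  right.
  exists (fun b => epsilon (inhabits b) (fun a => H (a, b))).
  have He : forall b, B b -> H (epsilon (inhabits b) (fun a => H (a, b)), b).
    move=> b Bb; exact: (epsilon_spec (inhabits b) (fun a => H (a, b)) (Hran b Bb)).
  split.
  - move=> b Bb; exact: (HAB _ _ (He b Bb)).1.
  - move=> b b' Bb Bb' E; apply: (Hf _ b b' (He b Bb)); rewrite E; exact: He.
have [b0 [Bb0 Nb0]] : exists b0, B b0 /\ ~ exists a, H (a, b0).
  apply: NNPP => N; apply: Hran => b Bb; apply: NNPP => N'; apply: N; exists b; by split.
exfalso; apply: (Hmax (fun p => H p \/ p = (a0, b0))).
  split.
  - move=> p Hp; by left.
  - move=> S; apply: Na0; exists b0; apply: S; by right.
split; [|split].
- move=> a b [h|h]; first exact: HAB.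
  case: h => -> ->; by split.
- move=> a b b' [h|h] [h'|h'].
  + exact: Hf h h'.
  + case: h' => E _; subst; exfalso; apply: Na0; by exists b.
  + case: h => E _; subst; exfalso; apply: Na0; by exists b'.
  + case: h => _ ->; by case: h' => _ ->.
- move=> a a' b [h|h] [h'|h'].
  + exact: Hi h h'.
  + case: h' => _ E; subst; exfalso; apply: Nb0; by exists a.
  + case: h => _ E; subst; exfalso; apply: Nb0; by exists a'.
  + case: h => -> _; by case: h' => -> _.
Qed.

End Card.


Local Open Scope classical_set_scope.
Section Sq.
Variable X : Type.
Variable i : nat -> X.
Hypothesis Hi : forall n m, i n = i m -> n = m.

Definition DG (G : (X * X) * X -> Prop) (x : X) : Prop := exists y, G ((x, x), y).

Definition good (G : (X * X) * X -> Prop) : Prop :=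
  (forall p y y', G (p, y) -> G (p, y') -> y = y') /\
  (forall p p' y, G (p, y) -> G (p', y) -> p = p') /\
  (forall x1 x2, (exists y, G ((x1, x2), y)) <-> (DG G x1 /\ DG G x2)) /\
  (forall p y, G (p, y) -> DG G y).

Definition G0 : (X * X) * X -> Prop := fun q =>
  exists n m, q = ((i n, i m), i (Cantor.to_nat (n, m))).

Lemma DG0 x : DG G0 x <-> exists n, x = i n.
Proof.
split.
- move=> [y [n [m E]]]; case: E => -> _ _; by exists n.
- move=> [n ->]; exists (i (Cantor.to_nat (n, n))); by exists n, n.
Qed.

Lemma good_G0 : good G0.
Proof.
split; [|split; [|split]].
- move=> p y y' [n [m E]] [n' [m' E']].
  case: E => Ep Ey; case: E' => Ep' Ey'; subst.
  case: Ep' => /Hi E1 /Hi E2; by subst.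
- move=> p p' y [n [m E]] [n' [m' E']].
  case: E => Ep Ey; case: E' => Ep' Ey'; subst.
  move/Hi: Ey' => E; have [-> ->] := @Cantor.to_nat_inj (n, m) (n', m') E; by [].
- move=> x1 x2; split.
  + move=> [y [n [m E]]]; case: E => -> -> _; split; apply/DG0; eauto.
  + move=> [/DG0 [n ->] /DG0 [m ->]]; exists (i (Cantor.to_nat (n, m))); by exists n, m.
- move=> p y [n [m E]]; case: E => _ ->; apply/DG0; eauto.
Qed.

Definition PP (G : (X * X) * X -> Prop) : Prop :=
  good G /\ ((forall q, ~ G q) \/ (forall q, G0 q -> G q)).

Lemma chain_PP (F : set (set ((X * X) * X))) :
  F `<=` PP -> total_on F subset -> PP (\bigcup_(G in F) G).
Proof.
move=> FP Ftot.
have Hmem : forall G1 G2 q1 q2, F G1 -> F G2 -> G1 q1 -> G2 q2 ->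
   exists G, F G /\ G q1 /\ G q2.
  move=> G1 G2 q1 q2 F1 F2 h1 h2; case: (Ftot G1 G2 F1 F2) => S.
  + exists G2; split => //; split => //; exact: S.
  + exists G1; split => //; split => //; exact: S.
have HDG : forall G x, F G -> DG G x -> DG (\bigcup_(G in F) G) x.
  move=> G x FG [y h]; exists y; by exists G.
split; [split; [|split; [|split]]|].
- move=> p y y' [G1 F1 h1] [G2 F2 h2].
  have [G [FG [g1 g2]]] := Hmem _ _ _ _ F1 F2 h1 h2.
  exact: ((FP G FG).1.1 _ _ _ g1 g2).
- move=> p p' y [G1 F1 h1] [G2 F2 h2].
  have [G [FG [g1 g2]]] := Hmem _ _ _ _ F1 F2 h1 h2.
  exact: ((FP G FG).1.2.1 _ _ _ g1 g2).
- move=> x1 x2; split.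
  + move=> [y [G FG h]].
    have [HD1 HD2] := (proj1 ((FP G FG).1.2.2.1 x1 x2) (ex_intro _ y h)).
    by split; [exact: (HDG G x1 FG HD1)|exact: (HDG G x2 FG HD2)].
  + move=> [[y1 [G1 F1 h1]] [y2 [G2 F2 h2]]].
    have [G [FG [g1 g2]]] := Hmem _ _ _ _ F1 F2 h1 h2.
    have [y h] := (proj2 ((FP G FG).1.2.2.1 x1 x2) (conj (ex_intro _ y1 g1) (ex_intro _ y2 g2))).
    exists y; by exists G.
- move=> p y [G FG h]; exact: (HDG G y FG ((FP G FG).1.2.2.2 _ _ h)).
- case: (classic (exists G, F G /\ forall q, G0 q -> G q)) => [[G [FG HG]]|N].
  + right => q h; exists G => //; exact: HG.
  + left => q [G FG h]; apply: N; exists G; split => //.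
    case: (FP G FG).2 => // E; exfalso; exact: E q h.
Qed.

End Sq.


Section Sq2.
Variable X : Type.
Variable i : nat -> X.
Hypothesis Hi : forall n m, i n = i m -> n = m.

Lemma square_inj : exists P : X -> X -> X,
  forall a b c d, P a b = P c d -> a = c /\ b = d.
Proof.
have [G [[Hgood HG0] Hmax]] := Zorn_bigcup (@chain_PP X i).
have HG0' : forall q, G0 X i q -> G q.
  case: HG0 => // Hempty; exfalso.
  apply: (Hmax (G0 X i)); last first.
    split; first exact: (good_G0 X i Hi).
    by right.
  split; first by move=> q h; exfalso; exact: Hempty q h.
  move=> S; apply: (Hempty ((i 0, i 0), i (Cantor.to_nat (0, 0)))); apply: S.
  by exists 0, 0.
case: Hgood => Hfun [Hinj [Hdom Hran]].
set D := DG X G.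
have Di : forall n, D (i n).
  move=> n; exists (i (Cantor.to_nat (n, n))); apply: HG0'; by exists n, n.
pose g := fun a b => epsilon (inhabits a) (fun y => G ((a, b), y)).
have Gg : forall a b, D a -> D b -> G ((a, b), g a b).
  move=> a b Da Db; apply: (epsilon_spec (inhabits a) (fun y => G ((a, b), y))).
  exact: (proj2 (Hdom a b) (conj Da Db)).
have ginj : forall a b a' b', D a -> D b -> D a' -> D b' -> g a b = g a' b' -> a = a' /\ b = b'.
  move=> a b a' b' Da Db Da' Db' E.
  have h1 := Gg a b Da Db; have h2 := Gg a' b' Da' Db'.
  rewrite E in h1; by case: (Hinj _ _ _ h1 h2).
have gD : forall a b, D a -> D b -> D (g a b).
  move=> a b Da Db; exact: (Hran _ _ (Gg a b Da Db)).
have i01 : i 0 <> i 1 by move/Hi.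
case: (compare_card X D (fun x => ~ D x)) => [[m [mC minj]]|[k [kD kinj]]].
- (* D injects into complement: extend G, contradiction *)
  exfalso.
  pose D' := fun x => D x \/ exists d, D d /\ x = m d.
  pose pi := fun x => epsilon (inhabits x) (fun d => D d /\ (x = d \/ (~ D x /\ x = m d))).
  have piP : forall x, D' x -> D (pi x) /\ (x = pi x \/ (~ D x /\ x = m (pi x))).
    move=> x Hx; apply: (epsilon_spec (inhabits x) (fun d => D d /\ (x = d \/ (~ D x /\ x = m d)))).
    case: Hx => [Dx|[d [Dd ->]]].
    + exists x; split => //; by left.
    + exists d; split => //; right; split => //; exact: mC.
  have piD : forall x, D x -> pi x = x.
    move=> x Dx; case: (piP x (or_introl Dx)) => _ [//|[N _]]; by exfalso.
  have piN : forall x, D' x -> ~ D x -> x = m (pi x).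
    move=> x Hx Nx; case: (piP x Hx) => _ [E|[_ //]]; rewrite -E in Nx *.
    by exfalso; apply: Nx; rewrite E; exact: (piP x Hx).1.
  pose tag := fun x1 x2 : X => if excluded_middle_informative (D x1) then 0
      else if excluded_middle_informative (D x2) then 1 else 2.
  pose N := fun q : (X * X) * X => D' q.1.1 /\ D' q.1.2 /\ ~ (D q.1.1 /\ D q.1.2) /\
      q.2 = m (g (i (tag q.1.1 q.1.2)) (g (pi q.1.1) (pi q.1.2))).
  pose G' := fun q => G q \/ N q.
  have DND : forall q, N q -> D (g (i (tag q.1.1 q.1.2)) (g (pi q.1.1) (pi q.1.2))).
    move=> q [h1 [h2 _]]; apply: (gD); first exact: Di.
    apply: (gD); [exact: (piP _ h1).1|exact: (piP _ h2).1].
  have NnD : forall q, N q -> ~ D q.2.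
    move=> q hq; rewrite hq.2.2.2; apply: (mC); exact: DND.
  have GD : forall a b y, G ((a, b), y) -> D a /\ D b.
    move=> a b y h; apply/(Hdom a b); by exists y.
  have DG' : forall x, DG X G' x <-> D' x.
    move=> x; split.
    - move=> [y [h|h]]; first by left; exact: (GD _ _ _ h).1.
      exact: h.1.
    - move=> Hx; case: (classic (D x)) => Dx.
      + case: Dx => y h; exists y; by left.
      + exists (m (g (i (tag x x)) (g (pi x) (pi x)))); right.
        split; [exact Hx|split; [exact Hx|split]]; last by reflexivity.
        by case.
  have Ntag : forall x1 x2, ~ (D x1 /\ D x2) ->
      (tag x1 x2 = 0 -> D x1 /\ ~ D x2) /\ (tag x1 x2 = 1 -> ~ D x1 /\ D x2) /\
      (tag x1 x2 = 2 -> ~ D x1 /\ ~ D x2).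
    move=> x1 x2 Nd; rewrite /tag.
    case: (excluded_middle_informative (D x1)) => d1;
    case: (excluded_middle_informative (D x2)) => d2 //=; try by split; [|split].
    by exfalso; apply: Nd.
  have recon : forall x x', D' x -> D' x' -> (D x <-> D x') -> pi x = pi x' -> x = x'.
    move=> x x' Hx Hx' Hdd Hp.
    case: (classic (D x)) => Dx.
    + rewrite -(piD x Dx) -(piD x' (proj1 Hdd Dx)); exact: Hp.
    + rewrite (piN x Hx Dx) (piN x' Hx') ?Hp //; by move/(proj2 Hdd).
  have Ngood : good X G'.
    split; [|split; [|split]].
    - move=> p y y' [h|h] [h'|h'].
      + exact: Hfun h h'.
      + case: p h h' => [a b] h h'; exfalso; exact: h'.2.2.1 (GD _ _ _ h).
      + case: p h h' => [a b] h h'; exfalso; exact: h.2.2.1 (GD _ _ _ h').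
      + by move: h.2.2.2 h'.2.2.2 => /= -> ->.
    - move=> p p' y [h|h] [h'|h'].
      + exact: Hinj h h'.
      + exfalso; apply: (NnD _ h'); exact: (Hran _ _ h).
      + exfalso; apply: (NnD _ h); exact: (Hran _ _ h').
      + case: p h h' => [a b] h; case: p' => [a' b'] h'.
        have E : m (g (i (tag a b)) (g (pi a) (pi b))) =
                 m (g (i (tag a' b')) (g (pi a') (pi b'))).
          by rewrite -h.2.2.2 -h'.2.2.2.
        have E2 := minj _ _ (DND _ h) (DND _ h') E.
        have [Et Eg] := ginj _ _ _ _ (Di _) (gD _ _ (piP _ h.1).1 (piP _ h.2.1).1)
          (Di _) (gD _ _ (piP _ h'.1).1 (piP _ h'.2.1).1) E2.
        move/Hi: Et => Et.
        have [E1 E2'] := ginj _ _ _ _ (piP _ h.1).1 (piP _ h.2.1).1 (piP _ h'.1).1 (piP _ h'.2.1).1 Eg.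
        have [t0 [t1 t2]] := Ntag a b h.2.2.1.
        have [t0' [t1' t2']] := Ntag a' b' h'.2.2.1.
        have Hab : (D a <-> D a') /\ (D b <-> D b').
          move: Et t0 t1 t2 t0' t1' t2'; rewrite /tag.
          case: (excluded_middle_informative (D a)) => d1;
          case: (excluded_middle_informative (D b)) => d2;
          case: (excluded_middle_informative (D a')) => d1';
          case: (excluded_middle_informative (D b')) => d2' //= _;
          intros; tauto.
        by rewrite (recon a a' h.1 h'.1 Hab.1 E1) (recon b b' h.2.1 h'.2.1 Hab.2 E2').
    - move=> x1 x2; rewrite !DG'; split.
      + move=> [y [h|h]]; last by split; [exact: h.1|exact: h.2.1].
        case: (GD _ _ _ h) => d1 d2; split; by left.
      + move=> [h1 h2]; case: (classic (D x1 /\ D x2)) => Dd.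
        * have [y h] := proj2 (Hdom x1 x2) Dd; exists y; by left.
        * exists (m (g (i (tag x1 x2)) (g (pi x1) (pi x2)))); right.
          split; [exact h1|split; [exact h2|split]]; last by reflexivity.
          exact: Dd.
    - move=> p y [h|h]; apply/DG'.
      + left; exact: (Hran _ _ h).
      + right; eexists; split; last exact: h.2.2.2.
        exact: (DND (p, y) h).
  apply: (Hmax G'); last first.
    split => //; right => q h; left; exact: HG0'.
  split; first by move=> q h; left.
  move=> S.
  have Nm : ~ D (m (i 0)) by apply: (mC); exact: Di.
  have D'm : D' (m (i 0)) by right; exists (i 0); split => //; exact: Di.
  have [y hy] := proj2 (DG' _) D'm.
  have h := S _ hy; apply: Nm; exact: (GD _ _ _ h).1.
-
  pose h := fun x => if excluded_middle_informative (D x) then g (i 0) x else g (i 1) (k x).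
  have hD : forall x, D (h x).
    move=> x; rewrite /h; case: (excluded_middle_informative (D x)) => Dx.
    + exact: gD (Di 0) Dx.
    + exact: gD (Di 1) (kD x Dx).
  have hinj : forall x y, h x = h y -> x = y.
    move=> x y; rewrite /h.
    case: (excluded_middle_informative (D x)) => Dx;
    case: (excluded_middle_informative (D y)) => Dy => E.
    + exact: (ginj _ _ _ _ (Di 0) Dx (Di 0) Dy E).2.
    + by case: (ginj _ _ _ _ (Di 0) Dx (Di 1) (kD y Dy) E) => /Hi.
    + by case: (ginj _ _ _ _ (Di 1) (kD x Dx) (Di 0) Dy E) => /Hi.
    + case: (ginj _ _ _ _ (Di 1) (kD x Dx) (Di 1) (kD y Dy) E) => _ E'.
      exact: kinj Dx Dy E'.
  exists (fun a b => g (h a) (h b)) => a b c d E.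
  case: (ginj _ _ _ _ (hD a) (hD b) (hD c) (hD d) E) => /hinj -> /hinj ->; by split.
Qed.
End Sq2.


Lemma list_nat_inj (X : Type) (i : nat -> X) (Hi : forall n m, i n = i m -> n = m) :
  exists F : list X * nat -> X, forall a b, F a = F b -> a = b.
Proof.
have [P HP] := square_inj X i Hi.
pose Fl := fix Fl (l : list X) : X := match l with nil => i 0 | x :: l' => P x (Fl l') end.
have Flinj : forall l l', length l = length l' -> Fl l = Fl l' -> l = l'.
  elim=> [|x l IH] [|x' l'] //= [] Hlen E.
  case: (HP _ _ _ _ E) => -> E'; by rewrite (IH l' Hlen E').
exists (fun p => P (P (i (length p.1)) (Fl p.1)) (i p.2)).
move=> [l n] [l' n'] /= E.
case: (HP _ _ _ _ E) => E1 /Hi ->.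
case: (HP _ _ _ _ E1) => /Hi E2 E3.
by rewrite (Flinj l l' E2 E3).
Qed.

End Card.


Definition conv1 (F : nat -> nat -> R) (a : nat) : R :=
  sum_f_R0 (fun i => F i (a - i)%nat) a.

Lemma smul_conv f g a b c d : smul f g a b c d =
  conv1 (fun i a' => conv1 (fun j b' => conv1 (fun k c' => conv1 (fun l d' =>
    f i j k l * g a' b' c' d') d) c) b) a.
Proof. reflexivity. Qed.

Lemma Cext F G a : (forall i r, F i r = G i r) -> conv1 F a = conv1 G a.
Proof. intros H; unfold conv1; apply sum_eq; intros; apply H. Qed.

Lemma sum_scal c f n : sum_f_R0 (fun i => c * f i) n = c * sum_f_R0 f n.
Proof. induction n; simpl; [reflexivity| rewrite IHn; ring]. Qed.

Lemma sum_zero n : sum_f_R0 (fun _ => 0) n = 0.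
Proof. induction n; simpl; [reflexivity| rewrite IHn; ring]. Qed.

Lemma sum_opp f n : sum_f_R0 (fun i => - f i) n = - sum_f_R0 f n.
Proof. induction n; simpl; [reflexivity| rewrite IHn; ring]. Qed.

Lemma Czero a : conv1 (fun _ _ => 0) a = 0.
Proof. apply sum_zero. Qed.

Lemma Cplus F G a : conv1 (fun i r => F i r + G i r) a = conv1 F a + conv1 G a.
Proof. unfold conv1; apply sum_plus. Qed.

Lemma Cscal c F a : conv1 (fun i r => c * F i r) a = c * conv1 F a.
Proof. apply sum_scal. Qed.

Lemma Copp F a : conv1 (fun i r => - F i r) a = - conv1 F a.
Proof. apply sum_opp. Qed.

Lemma sum_S_l f n : sum_f_R0 f (SS n) = f 0%nat + sum_f_R0 (fun i => f (SS i)) n.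
Proof.
  induction n; simpl; [reflexivity|]. simpl in IHn. rewrite IHn. ring.
Qed.

Lemma Cleft m F a : conv1 (fun i r => if Nat.leb m i then F (i - m)%nat r else 0) a =
  if Nat.leb m a then conv1 F (a - m)%nat else 0.
Proof.
  revert a F; induction m as [|m IH]; intros a F.
  - simpl. rewrite Nat.sub_0_r. apply Cext. intros i r. rewrite Nat.sub_0_r. reflexivity.
  - destruct a as [|a].
    + unfold conv1. simpl. reflexivity.
    + unfold conv1 at 1. rewrite sum_S_l. cbv beta.
      change (Nat.leb (SS m) 0) with false. cbv iota.
      transitivity (conv1 (fun i r => if Nat.leb m i then F (i - m)%nat r else 0) a).
      * rewrite Rplus_0_l. unfold conv1. apply sum_eq. intros; reflexivity.
      * rewrite IH. reflexivity.
Qed.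

Lemma Cright m F a : conv1 (fun i r => if Nat.leb m r then F i (r - m)%nat else 0) a =
  if Nat.leb m a then conv1 F (a - m)%nat else 0.
Proof.
  revert a F; induction m as [|m IH]; intros a F.
  - simpl. rewrite Nat.sub_0_r. apply Cext. intros i r. rewrite Nat.sub_0_r. reflexivity.
  - destruct a as [|a].
    + unfold conv1. simpl. reflexivity.
    + unfold conv1 at 1.
      change (sum_f_R0 ?f (SS a)) with (sum_f_R0 f a + f (SS a)). cbv beta.
      rewrite Nat.sub_diag. change (Nat.leb (SS m) 0) with false. cbv iota.
      rewrite Rplus_0_r.
      transitivity (conv1 (fun i r => if Nat.leb m r then F i (r - m)%nat else 0) a).
      * unfold conv1. apply sum_eq. intros i Hi.
        replace (SS a - i)%nat with (SS (a - i)) by lia. reflexivity.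
      * rewrite IH. reflexivity.
Qed.

Lemma Cunitl F a : conv1 (fun i r => if Nat.eqb i 0 then F r else 0) a = F a.
Proof.
  unfold conv1. destruct a; [simpl; reflexivity|].
  rewrite sum_S_l. simpl. try rewrite Nat.sub_0_r.
  replace (sum_f_R0 (fun i : nat => 0) a) with (conv1 (fun _ _ => 0) a) by reflexivity.
  rewrite Czero. ring.
Qed.

Lemma Cunitr F a : conv1 (fun i r => if Nat.eqb r 0 then F i else 0) a = F a.
Proof.
  unfold conv1. destruct a; [simpl; reflexivity|].
  change (sum_f_R0 ?f (SS a)) with (sum_f_R0 f a + f (SS a)). cbv beta.
  rewrite Nat.sub_diag. change (Nat.eqb 0 0) with true. cbv iota.
  replace (sum_f_R0 (fun i : nat => if Nat.eqb (SS a - i) 0 then F i else 0) a) with 0.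
  - ring.
  - symmetry. transitivity (sum_f_R0 (fun _ : nat => 0) a); [|apply sum_zero].
    apply sum_eq. intros i Hi.
    replace (SS a - i)%nat with (SS (a - i)) by lia. reflexivity.
Qed.

Lemma Cif (b : bool) F a : conv1 (fun i r => if b then F i r else 0) a = if b then conv1 F a else 0.
Proof. destruct b; [reflexivity| apply Czero]. Qed.


Definition conv4 (F : nat -> nat -> nat -> nat -> nat -> nat -> nat -> nat -> R) a b c d :=
  conv1 (fun i a' => conv1 (fun j b' => conv1 (fun k c' => conv1 (fun l d' =>
    F i j k l a' b' c' d') d) c) b) a.

Lemma smul_conv4 f g a b c d : smul f g a b c d =
  conv4 (fun i j k l a' b' c' d' => f i j k l * g a' b' c' d') a b c d.
Proof. reflexivity. Qed.

Lemma C4ext F G a b c d : (forall i j k l a' b' c' d', F i j k l a' b' c' d' = G i j k l a' b' c' d') ->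
  conv4 F a b c d = conv4 G a b c d.
Proof.
  intros H; unfold conv4. apply Cext; intros; apply Cext; intros; apply Cext; intros;
  apply Cext; intros; apply H.
Qed.

Lemma C4plus F G a b c d :
  conv4 (fun i j k l a' b' c' d' => F i j k l a' b' c' d' + G i j k l a' b' c' d') a b c d =
  conv4 F a b c d + conv4 G a b c d.
Proof.
  unfold conv4. rewrite <- Cplus. apply Cext; intros. cbv beta.
  rewrite <- Cplus. apply Cext; intros. cbv beta.
  rewrite <- Cplus. apply Cext; intros. cbv beta.
  rewrite <- Cplus. apply Cext; intros. reflexivity.
Qed.

Lemma C4scal x F a b c d :
  conv4 (fun i j k l a' b' c' d' => x * F i j k l a' b' c' d') a b c d = x * conv4 F a b c d.
Proof.
  unfold conv4. rewrite <- Cscal. apply Cext; intros. cbv beta.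
  rewrite <- Cscal. apply Cext; intros. cbv beta.
  rewrite <- Cscal. apply Cext; intros. cbv beta.
  rewrite <- Cscal. apply Cext; intros. reflexivity.
Qed.

Lemma C4zero a b c d : conv4 (fun _ _ _ _ _ _ _ _ => 0) a b c d = 0.
Proof.
  unfold conv4. transitivity (conv1 (fun _ _ => 0) a); [|apply Czero]. apply Cext; intros.
  transitivity (conv1 (fun _ _ => 0) b); [|apply Czero]. apply Cext; intros.
  transitivity (conv1 (fun _ _ => 0) c); [|apply Czero]. apply Cext; intros.
  apply Czero.
Qed.

Definition szero : S := fun _ _ _ _ => 0.
Definition scal (x : R) (f : S) : S := fun a b c d => x * f a b c d.
Definition e1 : S := sconst 1.
Definition shA (m : nat) (f : S) : S := fun a b c d => if Nat.leb m a then f (a - m)%nat b c d else 0.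
Definition shB (m : nat) (f : S) : S := fun a b c d => if Nat.leb m b then f a (b - m)%nat c d else 0.
Definition shC (m : nat) (f : S) : S := fun a b c d => if Nat.leb m c then f a b (c - m)%nat d else 0.
Definition shD (m : nat) (f : S) : S := fun a b c d => if Nat.leb m d then f a b c (d - m)%nat else 0.

Ltac feq := apply functional_extensionality; intro; apply functional_extensionality; intro;
  apply functional_extensionality; intro; apply functional_extensionality; intro.

Lemma smul_addl f g h : smul (sadd f g) h = sadd (smul f h) (smul g h).
Proof.
  feq. unfold sadd at 2. rewrite !smul_conv4. rewrite <- C4plus.
  apply C4ext; intros; unfold sadd; ring.
Qed.

Lemma smul_addr f g h : smul f (sadd g h) = sadd (smul f g) (smul f h).
Proof.
  feq. unfold sadd at 2. rewrite !smul_conv4. rewrite <- C4plus.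
  apply C4ext; intros; unfold sadd; ring.
Qed.

Lemma smul_scall x f g : smul (scal x f) g = scal x (smul f g).
Proof.
  feq. unfold scal at 2. rewrite !smul_conv4. rewrite <- C4scal.
  apply C4ext; intros; unfold scal; ring.
Qed.

Lemma smul_scalr x f g : smul f (scal x g) = scal x (smul f g).
Proof.
  feq. unfold scal at 2. rewrite !smul_conv4. rewrite <- C4scal.
  apply C4ext; intros; unfold scal; ring.
Qed.

Lemma smul_zerol g : smul szero g = szero.
Proof.
  feq. rewrite smul_conv4. unfold szero at 2. transitivity (conv4 (fun _ _ _ _ _ _ _ _ => 0) x x0 x1 x2); [|apply C4zero].
  apply C4ext; intros; unfold szero; ring.
Qed.

Lemma smul_zeror g : smul g szero = szero.
Proof.
  feq. rewrite smul_conv4. unfold szero at 2. transitivity (conv4 (fun _ _ _ _ _ _ _ _ => 0) x x0 x1 x2); [|apply C4zero].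
  apply C4ext; intros; unfold szero; ring.
Qed.


Ltac zc := lazymatch goal with
 | |- conv1 _ ?a = 0 => transitivity (conv1 (fun _ _ => 0) a); [apply Cext; intros; zc | apply Czero]
 | |- 0 = conv1 _ ?a => symmetry; zc
 | _ => idtac
 end.

Ltac feq4 := apply functional_extensionality; intros ?a; apply functional_extensionality; intros ?b;
  apply functional_extensionality; intros ?c; apply functional_extensionality; intros ?d.

Lemma e1_val a b c d : e1 a b c d = if (Nat.eqb a 0 && Nat.eqb b 0 && Nat.eqb c 0 && Nat.eqb d 0)%bool then 1 else 0.
Proof. reflexivity. Qed.

Lemma smul_er f : smul f e1 = f.
Proof.
  feq4. rewrite smul_conv.
  rewrite (Cext _ (fun i a' => if Nat.eqb a' 0 then conv1 (fun j b' => conv1 (fun k c' => conv1 (fun l d' => f i j k l * e1 0%nat b' c' d') d) c) b else 0)).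
  2:{ intros i a'. destruct (Nat.eqb a' 0) eqn:E.
      - apply Nat.eqb_eq in E; subst; reflexivity.
      - zc. rewrite e1_val, E. simpl. ring. }
  rewrite Cunitr.
  rewrite (Cext _ (fun j b' => if Nat.eqb b' 0 then conv1 (fun k c' => conv1 (fun l d' => f a j k l * e1 0%nat 0%nat c' d') d) c else 0)).
  2:{ intros j b'. destruct (Nat.eqb b' 0) eqn:E.
      - apply Nat.eqb_eq in E; subst; reflexivity.
      - zc. rewrite e1_val, E. simpl. ring. }
  rewrite Cunitr.
  rewrite (Cext _ (fun k c' => if Nat.eqb c' 0 then conv1 (fun l d' => f a b k l * e1 0%nat 0%nat 0%nat d') d else 0)).
  2:{ intros k c'. destruct (Nat.eqb c' 0) eqn:E.
      - apply Nat.eqb_eq in E; subst; reflexivity.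
      - zc. rewrite e1_val, E. simpl. ring. }
  rewrite Cunitr.
  rewrite (Cext _ (fun l d' => if Nat.eqb d' 0 then f a b c l else 0)).
  2:{ intros l d'. rewrite e1_val. simpl. destruct (Nat.eqb d' 0); ring. }
  apply Cunitr.
Qed.

Lemma smul_el f : smul e1 f = f.
Proof.
  feq4. rewrite smul_conv.
  rewrite (Cext _ (fun i a' => if Nat.eqb i 0 then conv1 (fun j b' => conv1 (fun k c' => conv1 (fun l d' => e1 0%nat j k l * f a' b' c' d') d) c) b else 0)).
  2:{ intros i a'. destruct (Nat.eqb i 0) eqn:E.
      - apply Nat.eqb_eq in E; subst; reflexivity.
      - zc. rewrite e1_val, E. simpl. ring. }
  rewrite Cunitl.
  rewrite (Cext _ (fun j b' => if Nat.eqb j 0 then conv1 (fun k c' => conv1 (fun l d' => e1 0%nat 0%nat k l * f a b' c' d') d) c else 0)).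
  2:{ intros j b'. destruct (Nat.eqb j 0) eqn:E.
      - apply Nat.eqb_eq in E; subst; reflexivity.
      - zc. rewrite e1_val, E. simpl. ring. }
  rewrite Cunitl.
  rewrite (Cext _ (fun k c' => if Nat.eqb k 0 then conv1 (fun l d' => e1 0%nat 0%nat 0%nat l * f a b c' d') d else 0)).
  2:{ intros k c'. destruct (Nat.eqb k 0) eqn:E.
      - apply Nat.eqb_eq in E; subst; reflexivity.
      - zc. rewrite e1_val, E. simpl. ring. }
  rewrite Cunitl.
  rewrite (Cext _ (fun l d' => if Nat.eqb l 0 then f a b c d' else 0)).
  2:{ intros l d'. rewrite e1_val. simpl. destruct (Nat.eqb l 0); ring. }
  apply Cunitl.
Qed.

Lemma smul_shAr m f g : smul f (shA m g) = shA m (smul f g).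
Proof.
  feq4. rewrite smul_conv.
  rewrite (Cext _ (fun i a' => if Nat.leb m a' then (fun i r => conv1 (fun j b' => conv1 (fun k c' => conv1 (fun l d' => f i j k l * g r b' c' d') d) c) b) i (a' - m)%nat else 0)).
  2:{ intros i a'. unfold shA. destruct (Nat.leb m a'); [reflexivity| zc; ring]. }
  exact (Cright m (fun i r => conv1 (fun j b' => conv1 (fun k c' => conv1 (fun l d' => f i j k l * g r b' c' d') d) c) b) _).
Qed.

Lemma smul_shBr m f g : smul f (shB m g) = shB m (smul f g).
Proof.
  feq4. rewrite smul_conv.
  rewrite (Cext _ (fun i a' => if Nat.leb m b then conv1 (fun j b' => conv1 (fun k c' => conv1 (fun l d' => f i j k l * g a' b' c' d') d) c) (b - m)%nat else 0)).
  2:{ intros i a'.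
      rewrite (Cext _ (fun j b' => if Nat.leb m b' then (fun j r => conv1 (fun k c' => conv1 (fun l d' => f i j k l * g a' r c' d') d) c) j (b' - m)%nat else 0)).
      2:{ intros j b'. unfold shB. destruct (Nat.leb m b'); [reflexivity| zc; ring]. }
      exact (Cright m (fun j r => conv1 (fun k c' => conv1 (fun l d' => f i j k l * g a' r c' d') d) c) _). }
  rewrite Cif. reflexivity.
Qed.

Lemma smul_shCr m f g : smul f (shC m g) = shC m (smul f g).
Proof.
  feq4. rewrite smul_conv.
  rewrite (Cext _ (fun i a' => if Nat.leb m c then conv1 (fun j b' => conv1 (fun k c' => conv1 (fun l d' => f i j k l * g a' b' c' d') d) (c - m)%nat) b else 0)).
  2:{ intros i a'.
      rewrite (Cext _ (fun j b' => if Nat.leb m c then conv1 (fun k c' => conv1 (fun l d' => f i j k l * g a' b' c' d') d) (c - m)%nat else 0)).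
      2:{ intros j b'.
          rewrite (Cext _ (fun k c' => if Nat.leb m c' then (fun k r => conv1 (fun l d' => f i j k l * g a' b' r d') d) k (c' - m)%nat else 0)).
          2:{ intros k c'. unfold shC. destruct (Nat.leb m c'); [reflexivity| zc; ring]. }
          exact (Cright m (fun k r => conv1 (fun l d' => f i j k l * g a' b' r d') d) _). }
      rewrite Cif. reflexivity. }
  rewrite Cif. reflexivity.
Qed.

Lemma smul_shDr m f g : smul f (shD m g) = shD m (smul f g).
Proof.
  feq4. rewrite smul_conv.
  rewrite (Cext _ (fun i a' => if Nat.leb m d then conv1 (fun j b' => conv1 (fun k c' => conv1 (fun l d' => f i j k l * g a' b' c' d') (d - m)%nat) c) b else 0)).
  2:{ intros i a'.
      rewrite (Cext _ (fun j b' => if Nat.leb m d then conv1 (fun k c' => conv1 (fun l d' => f i j k l * g a' b' c' d') (d - m)%nat) c else 0)).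
      2:{ intros j b'.
          rewrite (Cext _ (fun k c' => if Nat.leb m d then conv1 (fun l d' => f i j k l * g a' b' c' d') (d - m)%nat else 0)).
          2:{ intros k c'.
              rewrite (Cext _ (fun l d' => if Nat.leb m d' then (fun l r => f i j k l * g a' b' c' r) l (d' - m)%nat else 0)).
              2:{ intros l d'. unfold shD. destruct (Nat.leb m d'); [reflexivity| ring]. }
              exact (Cright m (fun l r => f i j k l * g a' b' c' r) _). }
          rewrite Cif. reflexivity. }
      rewrite Cif. reflexivity. }
  rewrite Cif. reflexivity.
Qed.

Lemma smul_shAl m f g : smul (shA m f) g = shA m (smul f g).
Proof.
  feq4. rewrite smul_conv.
  rewrite (Cext _ (fun i a' => if Nat.leb m i then (fun i r => conv1 (fun j b' => conv1 (fun k c' => conv1 (fun l d' => f i j k l * g r b' c' d') d) c) b) (i - m)%nat a' else 0)).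
  2:{ intros i a'. unfold shA. destruct (Nat.leb m i); [reflexivity| zc; ring]. }
  exact (Cleft m (fun i r => conv1 (fun j b' => conv1 (fun k c' => conv1 (fun l d' => f i j k l * g r b' c' d') d) c) b) _).
Qed.

Lemma smul_shBl m f g : smul (shB m f) g = shB m (smul f g).
Proof.
  feq4. rewrite smul_conv.
  rewrite (Cext _ (fun i a' => if Nat.leb m b then conv1 (fun j b' => conv1 (fun k c' => conv1 (fun l d' => f i j k l * g a' b' c' d') d) c) (b - m)%nat else 0)).
  2:{ intros i a'.
      rewrite (Cext _ (fun j b' => if Nat.leb m j then (fun j r => conv1 (fun k c' => conv1 (fun l d' => f i j k l * g a' r c' d') d) c) (j - m)%nat b' else 0)).
      2:{ intros j b'. unfold shB. destruct (Nat.leb m j); [reflexivity| zc; ring]. }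
      exact (Cleft m (fun j r => conv1 (fun k c' => conv1 (fun l d' => f i j k l * g a' r c' d') d) c) _). }
  rewrite Cif. reflexivity.
Qed.


Lemma eqb_split a m : Nat.eqb a m = (Nat.leb m a && Nat.eqb (a - m) 0)%bool.
Proof.
  destruct (Nat.eqb_spec a m); destruct (Nat.leb_spec m a); destruct (Nat.eqb_spec (a - m) 0);
  simpl; try reflexivity; exfalso; lia.
Qed.

Lemma smono_sh m1 m2 m3 m4 : smono m1 m2 m3 m4 = shA m1 (shB m2 (shC m3 (shD m4 e1))).
Proof.
  feq4. unfold smono, shA, shB, shC, shD. rewrite e1_val.
  rewrite (eqb_split a m1), (eqb_split b m2), (eqb_split c m3), (eqb_split d m4).
  destruct (Nat.leb m1 a), (Nat.leb m2 b), (Nat.leb m3 c), (Nat.leb m4 d),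
    (Nat.eqb (a - m1) 0), (Nat.eqb (b - m2) 0), (Nat.eqb (c - m3) 0), (Nat.eqb (d - m4) 0);
  reflexivity.
Qed.

Lemma shB0 f : shB 0 f = f.
Proof. feq4. unfold shB. simpl. rewrite Nat.sub_0_r. reflexivity. Qed.
Lemma shC0 f : shC 0 f = f.
Proof. feq4. unfold shC. simpl. rewrite Nat.sub_0_r. reflexivity. Qed.
Lemma shD0 f : shD 0 f = f.
Proof. feq4. unfold shD. simpl. rewrite Nat.sub_0_r. reflexivity. Qed.
Lemma shA0 f : shA 0 f = f.
Proof. feq4. unfold shA. simpl. rewrite Nat.sub_0_r. reflexivity. Qed.

Lemma sqq_mul s : smul sqq s = sadd (shA 2 s) (shB 2 s).
Proof.
  unfold sqq. rewrite smul_addl. rewrite !smono_sh, !shA0, !shB0, !shC0, !shD0.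
  rewrite smul_shAl, smul_shBl, !smul_el. reflexivity.
Qed.

Lemma smul_sqq_l s q : smul (smul sqq s) q = smul sqq (smul s q).
Proof.
  rewrite (sqq_mul s), (sqq_mul (smul s q)). rewrite smul_addl, smul_shAl, smul_shBl.
  reflexivity.
Qed.

Lemma smul_sqq_r p s : smul p (smul sqq s) = smul sqq (smul p s).
Proof.
  rewrite (sqq_mul s), (sqq_mul (smul p s)). rewrite smul_addr, smul_shAr, smul_shBr.
  reflexivity.
Qed.

Lemma eqv_refl p : eqv p p.
Proof. exists szero. intros. rewrite smul_zeror. unfold szero. ring. Qed.

Lemma eqv_sym p q : eqv p q -> eqv q p.
Proof.
  intros [s H]. exists (scal (-1) s). intros. rewrite smul_scalr. unfold scal.
  rewrite <- H. ring.
Qed.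

Lemma eqv_trans p q r : eqv p q -> eqv q r -> eqv p r.
Proof.
  intros [s1 H1] [s2 H2]. exists (sadd s1 s2). intros. rewrite smul_addr. unfold sadd.
  rewrite <- H1, <- H2. ring.
Qed.

Lemma eqv_fun p q : eqv p q -> eqv p = eqv q.
Proof.
  intros H. apply functional_extensionality. intros r. apply propositional_extensionality.
  split; intros H'.
  - apply eqv_trans with p; [apply eqv_sym|]; assumption.
  - apply eqv_trans with q; assumption.
Qed.

Lemma T_eq (x y : T) : proj1_sig x = proj1_sig y -> x = y.
Proof.
  destruct x as [x px], y as [y py]. simpl. intros E. subst. f_equal. apply proof_irrelevance.
Qed.

Lemma toT_eq p q : eqv p q -> toT p = toT q.
Proof. intros H. apply T_eq. simpl. apply eqv_fun. exact H. Qed.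

Lemma rep_spec t : proj1_sig t = eqv (rep t).
Proof.
  unfold rep. destruct (constructive_indefinite_description _ (proj2_sig t)) as [p Hp]. simpl. exact Hp.
Qed.

Lemma toT_rep t : toT (rep t) = t.
Proof. apply T_eq. simpl. rewrite rep_spec. reflexivity. Qed.

Lemma rep_toT p : eqv (rep (toT p)) p.
Proof.
  pose proof (rep_spec (toT p)) as H. simpl in H.
  apply eqv_sym. rewrite H. apply eqv_refl.
Qed.

Lemma toT_inj p q : toT p = toT q -> eqv p q.
Proof.
  intros H. apply (f_equal (@proj1_sig _ _)) in H. simpl in H. rewrite H. apply eqv_refl.
Qed.

Lemma eqv_add p p' q q' : eqv p p' -> eqv q q' -> eqv (sadd p q) (sadd p' q').
Proof.
  intros [s1 H1] [s2 H2]. exists (sadd s1 s2). intros. rewrite smul_addr. unfold sadd.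
  rewrite <- H1, <- H2. ring.
Qed.

Lemma eqv_as_sum p p' : eqv p p' -> exists s, p = sadd p' (smul sqq s).
Proof.
  intros [s H]. exists s. feq4. unfold sadd. rewrite <- H. ring.
Qed.

Lemma eqv_mul p p' q q' : eqv p p' -> eqv q q' -> eqv (smul p q) (smul p' q').
Proof.
  intros H1 H2. destruct (eqv_as_sum _ _ H1) as [s1 E1]. destruct (eqv_as_sum _ _ H2) as [s2 E2].
  subst p q.
  exists (sadd (smul p' s2) (sadd (smul s1 q') (smul s1 (smul sqq s2)))).
  intros.
  rewrite (smul_addl p' (smul sqq s1) (sadd q' (smul sqq s2))).
  rewrite (smul_addr p' q' (smul sqq s2)).
  rewrite (smul_addr (smul sqq s1) q' (smul sqq s2)).
  rewrite (smul_sqq_r p' s2), (smul_sqq_l s1 q'), (smul_sqq_l s1 (smul sqq s2)).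
  rewrite (smul_addr sqq (smul p' s2)).
  rewrite (smul_addr sqq (smul s1 q') (smul s1 (smul sqq s2))).
  unfold sadd. ring.
Qed.

Lemma Tadd_toT p q : Tadd (toT p) (toT q) = toT (sadd p q).
Proof. unfold Tadd. apply toT_eq. apply eqv_add; apply rep_toT. Qed.

Lemma Tmul_toT p q : Tmul (toT p) (toT q) = toT (smul p q).
Proof. unfold Tmul. apply toT_eq. apply eqv_mul; apply rep_toT. Qed.

Lemma eqv_restr p q c d : eqv p q -> p 0%nat 0%nat c d = q 0%nat 0%nat c d.
Proof.
  intros [s H]. specialize (H 0%nat 0%nat c d). rewrite sqq_mul in H.
  unfold sadd, shA, shB in H. simpl in H. lra.
Qed.


Lemma sconst_scal u : sconst u = scal u e1.
Proof.
  feq4. unfold scal. rewrite e1_val. unfold sconst.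
  destruct (Nat.eqb a 0 && Nat.eqb b 0 && Nat.eqb c 0 && Nat.eqb d 0)%bool; ring.
Qed.

Lemma sconst0 : sconst 0 = szero.
Proof. rewrite sconst_scal. feq4. unfold scal, szero. ring. Qed.

Lemma mono_x : smono 1 0 0 0 = shA 1 e1.
Proof. rewrite smono_sh, shB0, shC0, shD0. reflexivity. Qed.
Lemma mono_y : smono 0 1 0 0 = shB 1 e1.
Proof. rewrite smono_sh, shA0, shC0, shD0. reflexivity. Qed.
Lemma mono_z : smono 0 0 1 0 = shC 1 e1.
Proof. rewrite smono_sh, shA0, shB0, shD0. reflexivity. Qed.
Lemma mono_w : smono 0 0 0 1 = shD 1 e1.
Proof. rewrite smono_sh, shA0, shB0, shC0. reflexivity. Qed.

Definition Phi (u : R) (p : S) (n : nat) : R :=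
  sum_f_R0 (fun c => p 0%nat 0%nat c (n - c)%nat * (- u) ^ c) n.

Lemma Phi_eqv u p q n : eqv p q -> Phi u p n = Phi u q n.
Proof.
  intros H. unfold Phi. apply sum_eq. intros c _. rewrite (eqv_restr p q c (n - c)%nat H).
  reflexivity.
Qed.

Lemma telescope u r n :
  sum_f_R0 (fun c => (shC 1 r 0%nat 0%nat c (n - c)%nat + u * shD 1 r 0%nat 0%nat c (n - c)%nat) * (- u) ^ c) n = 0.
Proof.
  destruct n as [|N].
  - simpl. unfold shC, shD. simpl. ring.
  - rewrite (sum_eq _ (fun c => shC 1 r 0%nat 0%nat c (SS N - c)%nat * (- u) ^ c +
        u * shD 1 r 0%nat 0%nat c (SS N - c)%nat * (- u) ^ c)) by (intros; ring).
    rewrite sum_plus. rewrite sum_S_l.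
    change (sum_f_R0 ?f (SS N)) with (sum_f_R0 f N + f (SS N)).
    cbv beta. rewrite Nat.sub_diag.
    replace (shC 1 r 0%nat 0%nat 0%nat (SS N - 0)%nat) with 0 by (unfold shC; reflexivity).
    replace (shD 1 r 0%nat 0%nat (SS N) 0%nat) with 0 by (unfold shD; reflexivity).
    rewrite (sum_eq (fun i => shC 1 r 0%nat 0%nat (SS i) (SS N - SS i)%nat * (- u) ^ SS i)
      (fun i => - (u * shD 1 r 0%nat 0%nat i (SS N - i)%nat * (- u) ^ i))).
    + rewrite sum_opp. ring.
    + intros i Hi. unfold shC, shD.
      replace (SS N - i)%nat with (SS (N - i)) by lia.
      simpl Nat.leb. cbv iota. simpl pow.
      replace (SS i - 1)%nat with i by lia. replace (SS (N - i) - 1)%nat with (N - i)%nat by lia.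
      change (SS N - SS i)%nat with (N - i)%nat. ring.
Qed.

Lemma Phi_ideal u t : in_ideal [Tx; Ty; Tadd Tz (Tmul (Tconst u) Tw)] t -> forall n, Phi u (rep t) n = 0.
Proof.
  intros H n. simpl in H.
  destruct H as [c1 [t1 [E1 [c2 [t2 [E2 [c3 [t3 [E3 E4]]]]]]]]]. subst.
  rewrite <- (toT_rep c1), <- (toT_rep c2), <- (toT_rep c3).
  unfold Tx, Ty, Tz, Tw, Tconst, Tzero.
  rewrite !Tmul_toT, !Tadd_toT, !Tmul_toT, !Tadd_toT.
  rewrite (Phi_eqv _ _ _ _ (rep_toT _)).
  rewrite mono_x, mono_y, mono_z, mono_w, sconst0, (sconst_scal u).
  repeat first [rewrite smul_scall | rewrite smul_scalr | rewrite smul_addr | rewrite smul_shAr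
    | rewrite smul_shBr | rewrite smul_shCr | rewrite smul_shDr | rewrite smul_el | rewrite smul_er].
  unfold Phi. rewrite <- (telescope u (rep c3) n). apply sum_eq. intros c _.
  unfold sadd, scal, szero, shA, shB. simpl Nat.leb. cbv iota. ring.
Qed.

Lemma in_xy_J u t : in_ideal [Tx; Ty] t -> in_ideal [Tx; Ty; Tadd Tz (Tmul (Tconst u) Tw)] t.
Proof.
  simpl. intros [c1 [t1 [E1 [c2 [t2 [E2 E3]]]]]].
  exists c1, t1. split; [exact E1|]. exists c2, t2. split; [exact E2|].
  exists Tzero, Tzero. split; [|reflexivity]. subst t2.
  rewrite <- (toT_rep (Tadd Tz (Tmul (Tconst u) Tw))). unfold Tzero.
  rewrite Tmul_toT, Tadd_toT, sconst0, smul_zerol. f_equal. feq4. unfold sadd, szero. ring.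
Qed.

Lemma restr_zero_xy t : (forall c d, rep t 0%nat 0%nat c d = 0) -> in_ideal [Tx; Ty] t.
Proof.
  intros H. simpl.
  set (p := rep t) in *.
  set (A := fun a b c d => p (SS a) b c d).
  set (B := fun a b c d => if Nat.eqb a 0 then p 0%nat (SS b) c d else 0).
  exists (toT A), (Tadd (Tmul (toT B) Ty) Tzero). split.
  2:{ exists (toT B), Tzero. split; reflexivity. }
  rewrite <- (toT_rep t). fold p. unfold Tx, Ty, Tzero.
  rewrite !Tmul_toT, !Tadd_toT. rewrite mono_x, mono_y, sconst0, smul_shAr, smul_shBr, !smul_er.
  f_equal. feq4. unfold sadd, shA, shB, szero, A, B.
  destruct a as [|a]; destruct b as [|b]; simpl; try rewrite Nat.sub_0_r.
  - rewrite H. ring.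
  - ring.
  - ring.
  - ring.
Qed.


Fixpoint nt (n : nat) : T := match n with O => Tzero | SS n => Tadd Tone (nt n) end.

Lemma nt_toT n : nt n = toT (sconst (INR n)).
Proof.
  induction n as [|n IH]; [reflexivity|].
  simpl nt. rewrite IH. unfold Tone. rewrite Tadd_toT. f_equal. feq4. unfold sadd, sconst.
  rewrite S_INR. destruct (Nat.eqb a 0 && Nat.eqb b 0 && Nat.eqb c 0 && Nat.eqb d 0)%bool; ring.
Qed.

Lemma nt_inj n m : nt n = nt m -> n = m.
Proof.
  rewrite !nt_toT. intros H. apply toT_inj in H. apply (eqv_restr _ _ 0%nat 0%nat) in H.
  unfold sconst in H. simpl in H. apply INR_eq. exact H.
Qed.

Lemma nt_Rs Rs : is_subring Rs -> forall n, Rs (nt n).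
Proof.
  intros [H0 [H1 [Hadd _]]] n. induction n; simpl; auto.
Qed.

Lemma finite_bad (g : T) : ~ in_ideal [Tx; Ty] g ->
  exists L : list R, forall u, in_ideal [Tx; Ty; Tadd Tz (Tmul (Tconst u) Tw)] g -> In u L.
Proof.
  intros Hg. set (p := rep g).
  assert (Hex : exists c0 d0, p 0%nat 0%nat c0 d0 <> 0).
  { apply NNPP. intros N. apply Hg. apply restr_zero_xy. intros c d.
    apply NNPP. intros N'. apply N. exists c, d. exact N'. }
  destruct Hex as [c0 [d0 Hcd]].
  destruct (Roots.roots_finite (c0 + d0) (fun c => p 0%nat 0%nat c (c0 + d0 - c)%nat)) as [L HL].
  { exists c0. split; [lia|]. replace (c0 + d0 - c0)%nat with d0 by lia. exact Hcd. }
  exists (List.map Ropp L). intros u Hu.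
  pose proof (Phi_ideal u g Hu (c0 + d0)) as HP. unfold Phi in HP.
  apply in_map_iff. exists (- u). split; [ring|]. apply HL. exact HP.
Qed.

Lemma lift_list (Rs : T -> Prop) (l : list T) : Forall Rs l ->
  exists l' : list {t : T | Rs t}, List.map (@proj1_sig _ _) l' = l.
Proof.
  induction 1 as [|x l Hx Hl IH]; [exists nil; reflexivity|].
  destruct IH as [l' E]. exists (exist _ x Hx :: l'). simpl. rewrite E. reflexivity.
Qed.

Theorem mainTheorem15 (Rs : T -> Prop) (omega h : T) :
  N_subring Rs ->
  transc_mod [Tx; Ty] Rs (Tadd omega (Tmul Tz h)) ->
  exists Psi : R -> Prop,
    (exists f : {u : R | Psi u} -> {t : T | Rs t}, forall a b, f a = f b -> a = b) /\
    forall u : R, ~ Psi u ->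
      transc_mod [Tx; Ty; Tadd Tz (Tmul (Tconst u) Tw)] Rs (Tadd omega (Tmul Tz h)).
Proof.
  intros HN Htr. set (v := Tadd omega (Tmul Tz h)) in *.
  set (J := fun u : R => [Tx; Ty; Tadd Tz (Tmul (Tconst u) Tw)]).
  set (Bad := fun rs : list T => Forall Rs rs /\ ~ in_ideal [Tx; Ty] (peval rs v)).
  exists (fun u => exists rs, Bad rs /\ in_ideal (J u) (peval rs v)).
  split.
  -
    destruct HN as [Hsub _].
    set (X := {t : T | Rs t}).
    set (i := fun n : nat => (exist _ (nt n) (nt_Rs Rs Hsub n) : X)).
    assert (Hi : forall n m, i n = i m -> n = m).
    { intros n m E. apply (f_equal (@proj1_sig _ _)) in E. simpl in E. apply nt_inj. exact E. }
    destruct (Card.list_nat_inj X i Hi) as [F HF].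
    set (liftL := fun rs : list T => epsilon (inhabits (@nil X))
                     (fun l' : list X => List.map (@proj1_sig _ _) l' = rs)).
    assert (liftP : forall rs, Forall Rs rs -> List.map (@proj1_sig _ _) (liftL rs) = rs).
    { intros rs Hrs. unfold liftL. apply (epsilon_spec (inhabits (@nil X))
        (fun l' : list X => List.map (@proj1_sig _ _) l' = rs)). apply lift_list. exact Hrs. }
    set (Lf := fun rs : list T => epsilon (inhabits (@nil R))
                 (fun L => forall u, in_ideal (J u) (peval rs v) -> In u L)).
    assert (LfP : forall rs, Bad rs -> forall u, in_ideal (J u) (peval rs v) -> In u (Lf rs)).
    { intros rs [_ Hb]. unfold Lf. apply (epsilon_spec (inhabits (@nil R))
        (fun L => forall u, in_ideal (J u) (peval rs v) -> In u L)). apply finite_bad. exact Hb. }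
    set (idx := fun (u : R) (L : list R) => epsilon (inhabits 0%nat) (fun n => nth n L 0 = u)).
    assert (idxP : forall u L, In u L -> nth (idx u L) L 0 = u).
    { intros u L Hu. unfold idx. apply (epsilon_spec (inhabits 0%nat) (fun n => nth n L 0 = u)).
      destruct (In_nth L u 0 Hu) as [n [_ E]]. exists n. exact E. }
    set (rsof := fun (w : {u : R | exists rs, Bad rs /\ in_ideal (J u) (peval rs v)}) =>
                   proj1_sig (constructive_indefinite_description _ (proj2_sig w))).
    assert (rsP : forall w, Bad (rsof w) /\ in_ideal (J (proj1_sig w)) (peval (rsof w) v)).
    { intros w. unfold rsof. destruct (constructive_indefinite_description _ (proj2_sig w)) as [rs Hrs].
      exact Hrs. }
    exists (fun w => F (liftL (rsof w), idx (proj1_sig w) (Lf (rsof w)))).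
    intros w1 w2 E. apply HF in E. injection E as E1 E2.
    destruct (rsP w1) as [B1 I1]. destruct (rsP w2) as [B2 I2].
    assert (Ers : rsof w1 = rsof w2).
    { rewrite <- (liftP _ (proj1 B1)), <- (liftP _ (proj1 B2)). rewrite E1. reflexivity. }
    assert (Eu : proj1_sig w1 = proj1_sig w2).
    { assert (H1 := idxP (proj1_sig w1) (Lf (rsof w1)) (LfP _ B1 _ I1)).
      assert (H2 := idxP (proj1_sig w2) (Lf (rsof w2)) (LfP _ B2 _ I2)).
      exact (eq_trans (eq_sym H1) (eq_trans (f_equal2 (fun n L => nth n L 0) E2 (f_equal Lf Ers)) H2)). }
    destruct w1 as [u1 p1], w2 as [u2 p2]. simpl in Eu. subst u2. f_equal. apply proof_irrelevance.
  - intros u Hu rs Hrs Hin.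
    destruct (classic (in_ideal [Tx; Ty] (peval rs v))) as [Hxy|Hxy].
    + apply (Forall_impl _ (in_xy_J u)). apply Htr; assumption.
    + exfalso. apply Hu. exists rs. split; [split; assumption|exact Hin].
Qed.
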